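(* Let $p$ be prime and $H\le\mathrm{S}_n$ be in $\mathfrak{InP}(\mathrm{C}_p)$ with $|H|=p^s$, let $\gamma$ be as in the context, and let $M\in\mathrm{M}(s,k,p)$ be a generator matrix of $\gamma(H)$. Let $\beta$ be a point in the $H$-orbit $\Omega_j$. If the column $M_{*,j}$ is non-zero in exactly one row, say row $i$, then $\gamma(H_\beta)$ is the row space of the matrix obtained from $M$ by deleting row $i$.
   Context: $H\le\mathrm{S}_{n}$, $n=pk$, has orbits $\Omega_1,\dots,\Omega_k$ of size $p$ with each $G_i:=H|_{\Omega_i}$ cyclic of order $p$; $G=G_1\times\dots\times G_k$, $g_i$ a generator of $G_i$, and $\gamma:G\to\mathbb{F}_p^k$ the isomorphism $\gamma(g_1^{r_1}\cdots g_k^{r_k})=(r_1,\dots,r_k)$. A generator matrix of $\gamma(H)$ is an $s\times k$ matrix over $\mathbb{F}_p$ whose rows form a basis of $\gamma(H)$. $H_\beta$ is the point stabiliser. *)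

(* Defs.v *)
From mathcomp Require Import all_boot all_algebra all_fingroup all_solvable.
Set Implicit Arguments. Unset Strict Implicit. Unset Printing Implicit Defensive.

Definition gammaInv (p n k : nat) (g : 'I_k -> {perm 'I_n}) (r : 'rV['F_p]_k)
  : {perm 'I_n} :=
  (\prod_(i < k) (g i ^+ (nat_of_ord (r ord0 i))))%g.

Definition gamma (p n k : nat) (g : 'I_k -> {perm 'I_n}) (x : {perm 'I_n})
  : 'rV['F_p]_k :=
  odflt 0%R [pick r : 'rV['F_p]_k | gammaInv g r == x].

(* Main.v *)
Require Import Defs.
From mathcomp Require Import all_boot all_algebra all_fingroup all_solvable.
Import GRing.Theory.

Lemma orb_disj n k (H : {group {perm 'I_n}}) (Om : 'I_k -> {set 'I_n}) :
  injective Om ->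
  [set orbit 'P H x | x : 'I_n] = [set Om l | l : 'I_k] ->
  forall a l y, y \in Om l -> y \in Om a -> a = l.
Proof.
move=> Oinj Horb a l y yl ya.
have orbE b : exists x, Om b = orbit 'P H x.
  have : Om b \in [set Om l | l : 'I_k] by apply: imset_f.
  rewrite -Horb => /imsetP [x _ ->]; by exists x.
have [xa Ea] := orbE a; have [xl El] := orbE l.
apply: Oinj; rewrite Ea El.
move: ya yl; rewrite Ea El => /orbit_eqP <- /orbit_eqP <-; done.
Qed.

Lemma perm_on_pow n k (H : {group {perm 'I_n}}) (Om : 'I_k -> {set 'I_n})
  (g : 'I_k -> {perm 'I_n}) :
  (forall l, <[g l]>%g = (restr_perm (Om l) @* H)%g) ->
  forall m e, perm_on (Om m) (g m ^+ e)%g.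
Proof.
move=> Hgen m e.
have : (g m ^+ e)%g \in (restr_perm (Om m) @* H)%g by rewrite -Hgen mem_cycle.
case/morphimP => x _ _ ->; exact: restr_perm_on.
Qed.

Lemma prod_eval n k (Om : 'I_k -> {set 'I_n}) (F : 'I_k -> {perm 'I_n}) l y :
  (forall m, perm_on (Om m) (F m)) ->
  (forall a y, y \in Om l -> y \in Om a -> a = l) ->
  y \in Om l ->
  forall s : seq 'I_k, uniq s ->
  (\prod_(m <- s) F m)%g y = if l \in s then F l y else y.
Proof.
move=> Fon disj yl s; elim: s y yl => [|a s IH] y yl /=.
  by rewrite big_nil perm1.
case/andP=> an us; rewrite big_cons permM in_cons.
have [Ela|ne] := eqVneq l a.
  rewrite -Ela in an *; rewrite /= IH //; last by rewrite perm_closed.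
  by rewrite (negbTE an).
rewrite /= (out_perm (Fon a)); first exact: IH.
apply/negP => ya; move: (disj a y yl ya) ne => ->; by rewrite eqxx.
Qed.

Lemma gammaInv_eval p n k (Om : 'I_k -> {set 'I_n}) (g : 'I_k -> {perm 'I_n})
  (r : 'rV['F_p]_k) l y :
  (forall m e, perm_on (Om m) (g m ^+ e)%g) ->
  (forall a y, y \in Om l -> y \in Om a -> a = l) ->
  y \in Om l -> gammaInv g r y = (g l ^+ r ord0 l)%g y.
Proof.
move=> Fon disj yl; rewrite /gammaInv.
rewrite (@prod_eval _ _ Om (fun m => (g m ^+ r ord0 m)%g) l y (fun m => Fon m _) disj yl _ (index_enum_uniq _)).
by rewrite mem_index_enum.
Qed.

Theorem lemma5p1 (p n k s : nat) (H : {group {perm 'I_n}})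
  (Om : 'I_k -> {set 'I_n}) (g : 'I_k -> {perm 'I_n})
  (M : 'M['F_p]_(s, k)) (beta : 'I_n) (i : 'I_s) (j : 'I_k) :
  prime p -> n = (p * k)%N ->
  (* the H-orbits are exactly Om_1, ..., Om_k, each of size p *)
  injective Om ->
  [set orbit 'P H x | x : 'I_n] = [set Om l | l : 'I_k] ->
  (forall l, #|Om l| = p) ->
  (* each restriction G_l = H|_{Om_l} is cyclic of order p, generated by g_l *)
  (forall l, cyclic (restr_perm (Om l) @* H)%g /\ #|(restr_perm (Om l) @* H)%g| = p) ->
  (forall l, <[g l]>%g = (restr_perm (Om l) @* H)%g) ->
  #|H| = (p ^ s)%N ->
  (* M is a generator matrix of gamma(H) *)
  row_free M ->
  (forall r : 'rV['F_p]_k, (r <= M)%MS = (r \in [set gamma p g x | x in H])) ->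
  beta \in Om j ->
  (forall i' : 'I_s, (M i' j != 0%R) = (i' == i)) ->
  forall r : 'rV['F_p]_k,
    (r \in [set gamma p g x | x in ('C_H[beta | 'P])%g]) = (r <= row' i M)%MS.
Proof.
move=> pr En Oinj Horb Ocard Hcyc Hgen Hcard rf HM bj Hcol r.
have disj := @orb_disj _ _ H Om Oinj Horb.
have Fon := @perm_on_pow _ _ H Om g Hgen.
have ordg l : #[g l]%g = p by rewrite /order Hgen; case: (Hcyc l).
have ltp (x : 'F_p) : (x : nat) < p.
  by apply: leq_trans (ltn_ord _) _; rewrite Fp_cast.
have eval (r0 : 'rV['F_p]_k) l y : y \in Om l -> gammaInv g r0 y = (g l ^+ r0 ord0 l)%g y.
  by move=> yl; apply: (@gammaInv_eval p n k Om g r0 l y Fon (fun a y => disj a l y) yl).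
have inj (r1 r2 : 'rV['F_p]_k) : gammaInv g r1 = gammaInv g r2 -> r1 = r2.
  move=> E; apply/rowP => l.
  have Epow : (g l ^+ r1 ord0 l)%g = (g l ^+ r2 ord0 l)%g.
    apply/permP => y; case: (boolP (y \in Om l)) => yl.
      by rewrite -!eval // E.
    by rewrite !(out_perm (Fon _ _)).
  move/eqP: Epow; rewrite eq_expg_mod_order ordg !modn_small // => /eqP.
  exact: val_inj.
have gK (r0 : 'rV['F_p]_k) : gamma p g (gammaInv g r0) = r0.
  rewrite /gamma; case: pickP => [r1 /eqP /inj -> //|].
  by move/(_ r0); rewrite eqxx.
have gammaInv0 : gammaInv g (0%R : 'rV['F_p]_k) = 1%g.
  by rewrite /gammaInv big1 // => m _; rewrite mxE expg0.
have colz i' : i' != i -> M i' j = 0%R.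
  by move=> /negbTE; rewrite -Hcol => /negbFE/eqP.
have Mij : M i j != 0%R by rewrite Hcol.
have M1 (v : 'rV['F_p]_k) : (v <= row' i M)%MS -> v ord0 j = 0%R.
  move=> /submxP [b ->]; rewrite mxE big1 // => l _.
  rewrite mxE colz ?mulr0 //; by rewrite eq_sym neq_lift.
have M2 (v : 'rV['F_p]_k) : (v <= M)%MS -> v ord0 j = 0%R -> (v <= row' i M)%MS.
  move=> /submxP [a Ev] vj.
  have ai : a ord0 i = 0%R.
    move: vj; rewrite Ev mxE (bigD1 i) //= big1 ?addr0.
      by move/eqP; rewrite mulf_eq0 (negbTE Mij) orbF => /eqP.
    by move=> l nl; rewrite colz ?mulr0.
  rewrite Ev mulmx_sum_row summx_sub // => l _.
  case: (unliftP i l) => [l' ->|->].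
    apply: scalemx_sub.
    have -> : row (lift i l') M = row l' (row' i M) by apply/rowP=> c; rewrite !mxE.
    exact: row_sub.
  by rewrite ai scale0r sub0mx.
have rowM : (row' i M <= M)%MS.
  apply/row_subP => l.
  have -> : row l (row' i M) = row (lift i l) M by apply/rowP=> c; rewrite !mxE.
  exact: row_sub.
have fixj (x : {perm 'I_n}) (r0 : 'rV['F_p]_k) :
    x \in H -> x beta = beta -> gammaInv g r0 = x -> r0 ord0 j = 0%R.
  move=> xH xb E.
  have Ej : (g j ^+ r0 ord0 j)%g beta = beta by rewrite -eval // E.
  suff e0 : (r0 ord0 j : nat) = 0%N by apply: val_inj; rewrite /= e0.
  apply/eqP; apply/negP => /negP; rewrite -lt0n => e0.
  set e := (r0 ord0 j : nat) in Ej e0.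
  set sg := (g j ^+ e)%g in Ej.
  have ordsg : #|<[sg]>%g| = p.
    have -> : #|<[sg]>%g| = #[sg]%g by [].
    rewrite orderXgcd ordg.
    have : coprime p e by rewrite prime_coprime // (gtnNdvd e0 (ltp _)).
    by rewrite /coprime => /eqP ->; apply: divn1.
  have Csg : <[sg]>%g = <[g j]>%g.
    apply/eqP; rewrite eqEcard cycleX ordsg.
    have -> : #|<[g j]>%g| = #[g j]%g by [].
    by rewrite ordg leqnn.
  have fixall y : y \in <[g j]>%g -> y beta = beta.
    rewrite -Csg => /cycleP [m ->]; rewrite permX.
    by elim: m => //= m ->.
  have : 1 < #|Om j| by rewrite Ocard prime_gt1.
  rewrite (cardD1 beta) bj add1n ltnS => /card_gt0P [c].
  rewrite !inE => /andP [nb cj].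
  have : Om j \in [set orbit 'P H x | x : 'I_n] by rewrite Horb imset_f.
  case/imsetP => xj _ Ej'.
  have : c \in orbit 'P H beta.
    rewrite Ej' in bj cj.
    by move/orbit_eqP: bj => ->.
  case/orbitP => h hH hb.
  have hN : h \in 'N(Om j | 'P)%g.
    rewrite Ej'; exact: (subsetP (acts_orbit 'P xj (subsetT H))).
  have : restr_perm (Om j) h \in <[g j]>%g.
    by rewrite Hgen; apply: mem_morphim.
  move/fixall; rewrite restr_permE //.
  have -> : h beta = c by rewrite -apermE.
  by move=> cb; rewrite cb eqxx in nb.
apply/imsetP/idP.
  case=> x xC ->.
  move: xC; rewrite inE => /andP [xH /astab1P xb].
  rewrite /= apermE in xb.
  rewrite /gamma; case: pickP => [r0 /eqP Er0|_]; last exact: sub0mx.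
  apply: M2; last exact: (fixj x r0 xH xb Er0).
  by rewrite HM; apply/imsetP; exists x => //; rewrite -Er0 gK.
move=> rsub.
have : r \in [set gamma p g x | x in H] by rewrite -HM (submx_trans rsub rowM).
case/imsetP => x xH rE.
move: rE; rewrite /gamma; case: pickP => [r0 /eqP Er0 rE| _ r0].
  exists x; last by rewrite rE -Er0; exact: (esym (gK r0)).
  rewrite inE xH /=; apply/astab1P; rewrite /= apermE -Er0 (eval _ j) //.
  have : r ord0 j = 0%R by apply: M1.
  rewrite rE => /(congr1 val) /= ->.
  by rewrite expg0 perm1.
exists 1%g; first by rewrite group1.
rewrite r0 /= -gammaInv0; exact: (esym (gK 0%R)).
Qed.
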